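(* Let $\mathcal H$ be the $5$-uniform hypergraph defined below. Then $\mathcal{H}\setminus\{z\}$ has a fast winning strategy; that is, in the game in which FP and SP alternately claim previously unclaimed edges of $K^5_{\mathbb{N}}$ (FP first), SP has a strategy ensuring that after his seventh move his claimed edges contain a copy of $\mathcal{H}\setminus\{z\}$, regardless of FP's moves.
   Context: $\mathcal{H}$ has vertex set $\{z, v_1,\dots,v_9\}$ and edges $r=\{z,v_1,v_3,v_5,v_8\}$, $g=\{z,v_2,v_4,v_7,v_9\}$, $a=\{v_1,v_4,v_6,v_8,v_9\}$, $b=\{v_9,v_1,v_2,v_3,v_4\}$, and $e_i=\{v_i,v_{i+1},v_{i+2},v_{i+3},v_{i+4}\}$ for $i=1,\dots,5$. $\mathcal{H}\setminus\{z\}$ is obtained by deleting $z$ and the edges $r,g$; it has $7$ edges. $K^5_{\mathbb N}$ is the complete $5$-uniform hypergraph on $\mathbb N$; a copy is a subhypergraph isomorphic to the given one. *)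

(* Defs.v *)
From HB Require Import structures.
From mathcomp Require Import all_boot finmap.
Set Implicit Arguments. Unset Strict Implicit. Unset Printing Implicit Defensive.
Local Open Scope fset_scope.

(* Vertices of H: z is encoded as 0 and v_i as i (1 <= i <= 9). *)
Definition zv : nat := 0.

Definition e_ (i : nat) : seq nat := iota i 5.

Definition H_edges : seq (seq nat) :=
  [:: [:: zv; 1; 3; 5; 8]
   ;  [:: zv; 2; 4; 7; 9]
   ;  [:: 1; 4; 6; 8; 9]
   ;  [:: 9; 1; 2; 3; 4]
   ;  e_ 1; e_ 2; e_ 3; e_ 4; e_ 5].

Definition H_vertices : seq nat := iota 0 10.

Definition Hz_edges : seq (seq nat) := [seq e <- H_edges | zv \notin e].
Definition Hz_vertices : seq nat := [seq v <- H_vertices | v != zv].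

Definition edge5 (e : {fset nat}) : bool := #|` e| == 5.

Definition has_copy_Hz (F : seq {fset nat}) : Prop :=
  exists phi : nat -> nat,
    {in Hz_vertices &, injective phi} /\
    forall e, e \in Hz_edges -> [fset phi x | x in e] \in F.

(* A strategy for SP: given the history of all moves so far
   (FP's and SP's alternately, FP first, ending with FP's latest move),
   it returns SP's next edge. *)
Definition strategy := seq {fset nat} -> {fset nat}.

(* FP's moves are given by fp : nat -> {fset nat} (fp k = FP's (k+1)-th
   move). history sigma fp k = the sequence of the first 2k moves. *)
Fixpoint history (sigma : strategy) (fp : nat -> {fset nat}) (k : nat)
  : seq {fset nat} :=
  match k with
  | 0 => [::]
  | k'.+1 =>
      let h := history sigma fp k' in
      h ++ [:: fp k'; sigma (rcons h (fp k'))]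
  end.

Definition sp_edges (sigma : strategy) (fp : nat -> {fset nat}) (k : nat)
  : seq {fset nat} :=
  [seq sigma (rcons (history sigma fp i) (fp i)) | i <- iota 0 k].

Definition fp_legal (sigma : strategy) (fp : nat -> {fset nat}) (n : nat) : Prop :=
  forall k, k < n -> edge5 (fp k) /\ fp k \notin history sigma fp k.

Definition sp_legal (sigma : strategy) (fp : nat -> {fset nat}) (n : nat) : Prop :=
  forall k, k < n ->
    let s := sigma (rcons (history sigma fp k) (fp k)) in
    edge5 s /\ s \notin rcons (history sigma fp k) (fp k).

Definition sp_builds_Hz_in (n : nat) : Prop :=
  exists sigma : strategy,
    forall fp : nat -> {fset nat},
      fp_legal sigma fp n ->
      sp_legal sigma fp n /\ has_copy_Hz (sp_edges sigma fp n).

(* Main.v *)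
Require Import Defs.
From mathcomp Require Import all_boot finmap zify.
Local Open Scope fset_scope.

Section Gen.
Variable V : nat -> nat.
Hypothesis Vinj : forall i j, i < 9 -> j < 9 -> V i = V j -> i = j.

Definition SS (A : seq nat) : {fset nat} := [fset V i | i in A].
Definition seteq (A B : seq nat) := all (mem B) A && all (mem A) B.

Lemma inSS x A : (x \in SS A) = has (fun i => V i == x) A.
Proof.
apply/imfsetP/hasP => [[i hi ->]|[i hi /eqP <-]]; by exists i.
Qed.

Lemma SS_eq A B : all (fun i => i < 9) A -> all (fun i => i < 9) B ->
  (SS A == SS B) = seteq A B.
Proof.
move=> /allP hA /allP hB; apply/eqP/andP => [E|[/allP h1 /allP h2]].
  split; apply/allP => i hi.
    have : V i \in SS B by rewrite -E inSS; apply/hasP; exists i.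
    rewrite inSS => /hasP [j hj /eqP E']; by rewrite -(Vinj _ _ (hB j hj) (hA i hi) E').
  have : V i \in SS A by rewrite E inSS; apply/hasP; exists i.
  rewrite inSS => /hasP [j hj /eqP E']; by rewrite -(Vinj _ _ (hA j hj) (hB i hi) E').
apply/fsetP => x; rewrite !inSS; apply/hasP/hasP => [[i hi hx]|[i hi hx]];
  exists i => //; [exact: h1|exact: h2].
Qed.

Lemma card_SS A : all (fun i => i < 9) A -> uniq A -> #|` SS A| = size A.
Proof.
move=> /allP hA uA; rewrite /SS card_in_imfset.
  apply: perm_size; apply: uniq_perm => //; first exact: enum_finmem_uniq.
  by move=> x; rewrite enum_finmemE.
move=> i j hi hj; apply: Vinj; [exact: hA|exact: hA].
Qed.

Lemma copy_of (As : seq (seq nat)) (L : seq nat) :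
 let c := fun x => nth 0 L x.-1 in
 all (all (fun i => i < 9)) As ->
 all (fun x => c x < 9) Hz_vertices ->
 all (fun x => all (fun y => (c x == c y) ==> (x == y)) Hz_vertices) Hz_vertices ->
 all (fun e => all (fun x => c x < 9) e) Hz_edges ->
 all (fun e => has (fun A => seteq (map c e) A) As) Hz_edges ->
 has_copy_Hz [seq SS A | A <- As].
Proof.
move=> c hAs /allP hc /allP hinj /allP hce /allP hE.
exists (fun x => V (c x)); split.
  move=> x y hx hy /Vinj E.
  have := allP (hinj x hx) y hy; rewrite E ?hc ?eqxx //= => /eqP //.
move=> e he; have /hasP [A hA hs] := hE e he.
have -> : [fset V (c x) | x in e] = SS (map c e).
  apply/fsetP => x; rewrite inSS; apply/imfsetP/hasP => [[y hy ->]|[i /mapP [y hy ->] /eqP <-]].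
    by exists (c y) => //; apply: map_f.
  by exists y.
have -> : SS (map c e) = SS A.
  apply/eqP; rewrite SS_eq //; first by apply/allP => i /mapP [y hy ->]; exact: (allP (hce e he)).
  exact: (allP hAs).
by apply: map_f.
Qed.
End Gen.

Fixpoint maxl (l : seq nat) : nat := if l is x :: t then maxn x (maxl t) else 0.
Definition fresh (l : seq {fset nat}) : nat :=
  (maxl (flatten (map (fun S : {fset nat} => enum_fset S) l))).+1.
Definition lab (h : seq {fset nat}) (i : nat) : nat :=
  (if i < 5 then fresh (take 1 h) + i else fresh (take (2 * (i - 4)).+1 h))%N.
Definition mk h (A : seq nat) : {fset nat} := [fset lab h i | i in A].

Notation LE1 := ([:: 0; 1; 2; 3; 4]).
Notation LE2 := ([:: 0; 1; 2; 3; 5]).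
Notation LE3 := ([:: 0; 1; 2; 4; 6]).
Notation LE4 := ([:: 0; 1; 3; 5; 7]).
Notation LE5 := ([:: 0; 2; 4; 6; 8]).
Notation LX := ([:: 1; 3; 5; 7; 8]).
Notation LZ1 := ([:: 0; 3; 6; 7; 8]).
Notation LZ2 := ([:: 1; 2; 6; 7; 8]).
Notation LY := ([:: 2; 4; 6; 7; 8]).
Notation LW1 := ([:: 0; 4; 5; 7; 8]).
Notation LW2 := ([:: 1; 2; 5; 7; 8]).

Definition c6 h := (mk h LX \in h) || (mk h LZ1 \in h) || (mk h LZ2 \in h).

Definition sigma0 : strategy := fun h =>
  match size h with
  | 1 => mk h LE1
  | 3 => mk h LE2
  | 5 => mk h LE3
  | 7 => mk h LE4
  | 9 => mk h LE5
  | 11 => if c6 h then mk h LY else mk h LX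
  | 13 => if c6 (take 11 h) then (if mk h LW1 \in h then mk h LW2 else mk h LW1)
          else (if mk h LZ1 \in h then mk h LZ2 else mk h LZ1)
  | _ => fset0
  end.

Lemma maxl_ge x l : x \in l -> x <= maxl l.
Proof.
elim: l => //= y t IH; rewrite in_cons => /orP [/eqP ->|/IH h].
  exact: leq_maxl.
exact: leq_trans h (leq_maxr _ _).
Qed.

Lemma fresh_gt x (S : {fset nat}) l : x \in S -> S \in l -> x < fresh l.
Proof.
move=> hx hS; rewrite /fresh ltnS; apply: maxl_ge.
apply/flattenP; exists (enum_fset S) => //.
by apply/mapP; exists S.
Qed.

Lemma notin_fresh x (S : {fset nat}) l : x \in S -> fresh l <= x -> S \notin l.
Proof.
move=> hx hf; apply/negP => hS; have := @fresh_gt x S l hx hS; by rewrite ltnNge hf.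
Qed.

Section Play.
Variable fp : nat -> {fset nat}.
Let hist r := history sigma0 fp r.
Let H r := rcons (hist r) (fp r).
Let s r := sigma0 (H r).

Lemma hist_succ r : hist r.+1 = hist r ++ [:: fp r; s r].
Proof. by []. Qed.

Lemma size_hist r : size (hist r) = 2 * r.
Proof. elim: r => // r IH; rewrite hist_succ size_cat IH /=; lia. Qed.

Lemma size_H r : size (H r) = (2 * r).+1.
Proof. by rewrite /H size_rcons size_hist. Qed.

Lemma take_hist r d : take (2 * r).+1 (hist (r + d).+1) = H r.
Proof.
elim: d => [|d IH].
  rewrite addn0 hist_succ take_cat size_hist ltnNge leqnSn /=.
  by rewrite subSn // subnn /= cats1.
rewrite addnS hist_succ take_cat size_hist.
have -> : (2 * r).+1 < 2 * (r + d).+1 by lia.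
exact: IH.
Qed.

Lemma take_H r d : take (2 * r).+1 (H (r + d)) = H r.
Proof.
case: d => [|d].
  by rewrite addn0 take_oversize // size_H.
rewrite /H -cats1 take_cat size_hist.
have -> : (2 * r).+1 < 2 * (r + d.+1) by lia.
by rewrite addnS take_hist.
Qed.

Definition F r := fresh (H r).
Definition V i := (if i < 5 then F 0 + i else F (i - 4))%N.

Lemma lab_H r i : i <= r + 4 -> lab (H r) i = V i.
Proof.
move=> hi; rewrite /lab /V; case: ifP => h5.
  by rewrite /F -(take_H 0 r).
rewrite /F; congr fresh.
have -> : r = ((i - 4) + (r - (i - 4)))%N by lia.
by rewrite take_H.
Qed.

Lemma mk_H r A : all (fun i => i <= r + 4) A -> mk (H r) A = SS V A.
Proof.
move=> /allP hA; apply: eq_in_imfset => i hi; exact: lab_H (hA i hi).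
Qed.


Lemma s_in r : s r \in H r.+1.
Proof. by rewrite /H hist_succ mem_rcons in_cons !mem_cat !in_cons eqxx !orbT. Qed.

Lemma memH r x : (x \in H r.+1) = [|| x == fp r.+1, x \in H r | x == s r].
Proof.
rewrite /H hist_succ !mem_rcons in_cons !mem_cat !in_cons in_nil orbF.
by case: (x == fp r.+1); case: (x \in hist r); case: (x == fp r); case: (x == s r).
Qed.

Lemma VinSS k A : k \in A -> V k \in SS V A.
Proof. by move=> hk; rewrite inSS; apply/hasP; exists k. Qed.

Lemma s0E : s 0 = SS V LE1.
Proof. rewrite /s /sigma0 (size_H 0) /=; exact: mk_H. Qed.
Lemma s1E : s 1 = SS V LE2.
Proof. rewrite /s /sigma0 (size_H 1) /=; exact: mk_H. Qed.
Lemma s2E : s 2 = SS V LE3.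
Proof. rewrite /s /sigma0 (size_H 2) /=; exact: mk_H. Qed.
Lemma s3E : s 3 = SS V LE4.
Proof. rewrite /s /sigma0 (size_H 3) /=; exact: mk_H. Qed.
Lemma s4E : s 4 = SS V LE5.
Proof. rewrite /s /sigma0 (size_H 4) /=; exact: mk_H. Qed.

Lemma F_lt r k A : s r = SS V A -> k \in A -> V k < F r.+1.
Proof. move=> E hk; apply: (@fresh_gt _ (s r)); last exact: s_in. by rewrite E VinSS. Qed.

Lemma Vmono i : i < 8 -> V i < V i.+1.
Proof.
case: i => [|[|[|[|[|[|[|[|]]]]]]]] // _.
1-4: by rewrite /V /=; lia.
- have := @F_lt 0 4 _ s0E isT; rewrite /V /= (_ : (5 - 4 = 1)%N) //; lia.
- exact: (@F_lt 1 5 _ s1E isT).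
- exact: (@F_lt 2 6 _ s2E isT).
- exact: (@F_lt 3 7 _ s3E isT).
Qed.

Lemma Vlt i j : i < j -> j < 9 -> V i < V j.
Proof.
move=> hij; elim: j hij => // j IH; rewrite ltnS leq_eqVlt => /orP [/eqP [->]|hij] hj.
  by apply: Vmono.
have h1 := IH hij (ltnW hj). have h2 : V j < V j.+1 by apply: Vmono; lia. exact: ltn_trans h1 h2.
Qed.

Lemma Vinj i j : i < 9 -> j < 9 -> V i = V j -> i = j.
Proof.
move=> hi hj E; case: (ltngtP i j) => // h.
  by have := Vlt _ _ h hj; rewrite E ltnn.
by have := Vlt _ _ h hi; rewrite E ltnn.
Qed.

Lemma SSE A B : all (fun i => i < 9) A -> all (fun i => i < 9) B ->
  (SS V A == SS V B) = seteq A B.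
Proof. exact: (@SS_eq V Vinj A B). Qed.

Lemma notinH r A k : k \in A -> V k = F r -> SS V A \notin H r.
Proof. move=> hk E; apply: (@notin_fresh (V k)); [exact: VinSS | by rewrite E]. Qed.

Lemma edge5SS A : all (fun i => i < 9) A -> uniq A -> size A = 5 -> edge5 (SS V A).
Proof. by move=> h u sz; rewrite /edge5 (@card_SS V Vinj A) // sz. Qed.

Lemma mem5 A : 8 \in A -> all (fun i => i < 9) A -> ~~ seteq A LE5 ->
  (SS V A \in H 5) = (SS V A == fp 5).
Proof.
move=> h8 hA hne; rewrite memH s4E SSE // (negbTE hne) orbF.
by rewrite (negbTE (notinH 4 A 8 h8 (erefl _))) orbF.
Qed.

Lemma mem6 A : (SS V A \in H 6) = [|| SS V A == fp 6, SS V A \in H 5 | SS V A == s 5].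
Proof. exact: memH. Qed.

Lemma c6E : c6 (H 5) = (SS V LX == fp 5) || (SS V LZ1 == fp 5) || (SS V LZ2 == fp 5).
Proof. rewrite /c6 !mk_H //. rewrite (mem5 LX); try by []. rewrite (mem5 LZ1); try by []. rewrite (mem5 LZ2); by []. Qed.

Lemma s5E : s 5 = if c6 (H 5) then SS V LY else SS V LX.
Proof. by rewrite /s /sigma0 (size_H 5) /= !mk_H. Qed.

Lemma s6E : s 6 = if c6 (H 5) then (if SS V LW1 \in H 6 then SS V LW2 else SS V LW1)
   else (if SS V LZ1 \in H 6 then SS V LZ2 else SS V LZ1).
Proof.
by rewrite /s /sigma0 (size_H 6) /= !mk_H //.
Qed.

Lemma c6_ne A : c6 (H 5) -> all (fun i => i < 9) A ->
  ~~ seteq LX A -> ~~ seteq LZ1 A -> ~~ seteq LZ2 A -> SS V A != fp 5.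
Proof.
move=> hc hA h1 h2 h3; apply/negP => /eqP E; move: hc; rewrite c6E -E !SSE //.
by rewrite (negbTE h1) (negbTE h2) (negbTE h3).
Qed.

Lemma spleg : sp_legal sigma0 fp 7.
Proof.
move=> k hk; change (edge5 (s k) /\ s k \notin H k).
case: k hk => [|[|[|[|[|[|[|k]]]]]]] // _.
- rewrite s0E; split; first by apply: edge5SS.
  by apply: (notinH 0 _ 0) => //; rewrite /V /= addn0.
- rewrite s1E; split; first by apply: edge5SS.
  exact: (notinH 1 _ 5).
- rewrite s2E; split; first by apply: edge5SS.
  exact: (notinH 2 _ 6).
- rewrite s3E; split; first by apply: edge5SS.
  exact: (notinH 3 _ 7).
- rewrite s4E; split; first by apply: edge5SS.
  exact: (notinH 4 _ 8).
- rewrite s5E; case hc: (c6 (H 5)); (split; first by apply: edge5SS).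
    rewrite (mem5 LY) //. apply: c6_ne => //.
  rewrite (mem5 LX) //; apply/negP => E.
  by rewrite c6E E in hc.
- rewrite s6E; case hc: (c6 (H 5)).
    have n1 : SS V LW1 != fp 5 by apply: c6_ne.
    have n2 : SS V LW2 != fp 5 by apply: c6_ne.
    case hw: (SS V LW1 \in H 6); (split; first by apply: edge5SS); rewrite ?hw //.
    move: hw; rewrite !mem6 (mem5 LW1) // (mem5 LW2) // s5E hc (negbTE n1) (negbTE n2).
    rewrite (SSE LW1 LY) // (SSE LW2 LY) //= !orbF => /eqP <-.
    by rewrite SSE.
  have n1 : SS V LZ1 != fp 5 by apply/negP => E; rewrite c6E E orbT in hc.
  have n2 : SS V LZ2 != fp 5 by apply/negP => E; rewrite c6E E !orbT in hc.
  case hw: (SS V LZ1 \in H 6); (split; first by apply: edge5SS); rewrite ?hw //.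
  move: hw; rewrite !mem6 (mem5 LZ1) // (mem5 LZ2) // s5E hc (negbTE n1) (negbTE n2).
  rewrite (SSE LZ1 LX) // (SSE LZ2 LX) //= !orbF => /eqP <-.
  by rewrite SSE.
Qed.

Lemma spcopy : has_copy_Hz (sp_edges sigma0 fp 7).
Proof.
change (has_copy_Hz [:: s 0; s 1; s 2; s 3; s 4; s 5; s 6]).
rewrite s0E s1E s2E s3E s4E s5E s6E.
case: (c6 (H 5)); [case: (SS V LW1 \in H 6)|case: (SS V LZ1 \in H 6)].
- apply: (@copy_of V Vinj [:: LE1; LE2; LE3; LE4; LE5; LY; LW2] [:: 8; 6; 4; 2; 0; 1; 3; 5; 7]); reflexivity.
- apply: (@copy_of V Vinj [:: LE1; LE2; LE3; LE4; LE5; LY; LW1] [:: 5; 3; 1; 0; 2; 4; 6; 8; 7]); reflexivity.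
- apply: (@copy_of V Vinj [:: LE1; LE2; LE3; LE4; LE5; LX; LZ2] [:: 7; 5; 3; 1; 0; 2; 4; 6; 8]); reflexivity.
- apply: (@copy_of V Vinj [:: LE1; LE2; LE3; LE4; LE5; LX; LZ1] [:: 6; 4; 2; 0; 1; 3; 5; 7; 8]); reflexivity.
Qed.

End Play.

Theorem lemma4p1 : sp_builds_Hz_in 7.
Proof.
exists sigma0 => fp _; split; [exact: spleg | exact: spcopy].
Qed.
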